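(* For every integer $j\ge0$, in $\mathbb{Z}[q,q^{-1}][[y]]$, \[ (-1)^jq^{-\binom{j+1}{2}}y^{-j}\sum_{i\ge j}(-1)^iq^{\binom{i+1}{2}}\begin{bmatrix} i\\ j\end{bmatrix}y^i\prod_{r=1}^{i+1}\frac{1}{1-q^{r+j}y}=1. \]
   Context: $[m]=1+q+\dots+q^{m-1}$, $[m]!=\prod_{s=1}^m[s]$, and $\begin{bmatrix} i\\ j\end{bmatrix}=\frac{[i]!}{[j]![i-j]!}$ is the Gaussian binomial coefficient. Note $y^{-j}y^i=y^{i-j}$ with $i\ge j$, so each summand is a power series in $y$, and the sum converges $y$-adically. *)

(* Defs.v *)
From HB Require Import structures.
From mathcomp Require Import all_boot all_order all_algebra.
From mathcomp Require Import fraction.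
Set Implicit Arguments. Unset Strict Implicit. Unset Printing Implicit Defensive.
Import Order.TTheory GRing.Theory Num.Theory.
Local Open Scope ring_scope.

(* formal power series in y: f n = coefficient of y^n *)
Definition pser (R : comRingType) := nat -> R.

Definition ps_one (R : comRingType) : pser R := fun n => (n == 0%N)%:R.

Definition ps_mul (R : comRingType) (f g : pser R) : pser R :=
  fun n => \sum_(k < n.+1) f k * g (n - k)%N.

Definition ps_scale (R : comRingType) (c : R) (f : pser R) : pser R :=
  fun n => c * f n.

Definition ps_yshift (R : comRingType) (m : nat) (f : pser R) : pser R :=
  fun n => if (m <= n)%N then f (n - m)%N else 0.

(* 1/(1 - a y) = \sum_n a^n y^n, the inverse of 1 - a y in R[[y]] *)
Definition ps_inv1m (R : comRingType) (a : R) : pser R := fun n => a ^+ n.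

Definition ps_prod (R : comRingType) (s : seq (pser R)) : pser R :=
  foldr (@ps_mul R) (@ps_one R) s.

(* y-adic sum \sum_(i >= j) F i, valid when F i has y-order >= i - j:
   the coefficient of y^n only receives contributions from j <= i <= j + n *)
Definition ps_ysum_from (R : comRingType) (j : nat) (F : nat -> pser R) : pser R :=
  fun n => \sum_(j <= i < j + n.+1) F i n.

(* the coefficient ring: Z[q,q^{-1}] embedded in its fraction field Q(q) *)
Definition Kq := {fraction {poly int}}.
Definition q : Kq := tofrac ('X : {poly int}).

Definition qint (m : nat) : Kq := \sum_(s < m) q ^+ s.
Definition qfact (m : nat) : Kq := \prod_(1 <= s < m.+1) qint s.
Definition qbinom (i j : nat) : Kq := qfact i / (qfact j * qfact (i - j)).

(* Main.v *)
Require Import Defs.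
From HB Require Import structures.
From mathcomp Require Import all_boot all_order all_algebra.
From mathcomp Require Import fraction.
From mathcomp Require Import ring zify.
From Stdlib Require Import FunctionalExtensionality.
Import Order.TTheory GRing.Theory Num.Theory.
Local Open Scope ring_scope.

Fixpoint G (n k : nat) : Kq :=
  match n, k with
  | 0%N, 0%N => 1
  | 0%N, _ => 0
  | n'.+1, 0%N => 1
  | n'.+1, k'.+1 => G n' k' + q ^+ k'.+1 * G n' k'.+1
  end.

Lemma G_n0 n : G n 0 = 1. Proof. by case: n. Qed.
Lemma GS n k : G n.+1 k.+1 = G n k + q ^+ k.+1 * G n k.+1. Proof. by []. Qed.

Lemma G_small n k : (n < k)%N -> G n k = 0.
Proof.
elim: n k => [|n IH] [|k] //= H.
by rewrite !IH ?mulr0 ?addr0 // ltnW.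
Qed.

Lemma G_nn n : G n n = 1.
Proof. by elim: n => //= n ->; rewrite G_small // mulr0 addr0. Qed.

Lemma q_neq0 : q != 0.
Proof. by rewrite /q tofrac_eq0 polyX_eq0. Qed.

Lemma qintD a b : qint (a + b) = qint a + q ^+ a * qint b.
Proof.
rewrite /qint big_split_ord /= mulr_sumr; congr (_ + _).
by apply: eq_bigr => i _; rewrite exprD.
Qed.

Lemma qintS a : qint a.+1 = 1 + q * qint a.
Proof. by rewrite -add1n qintD /qint big_ord1 expr1. Qed.

Lemma qint_neq0 s : (0 < s)%N -> qint s != 0.
Proof.
case: s => // s _.
have -> : qint s.+1 = tofrac (\sum_(t < s.+1) ('X : {poly int}) ^+ t).
  by rewrite rmorph_sum; apply: eq_bigr => i _; rewrite rmorphXn.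
rewrite tofrac_eq0; apply/eqP => /(congr1 (fun p : {poly int} => p`_0)).
rewrite coef_sum big_ord_recl /= coefXn eqxx coef0 big1 ?addr0 //.
by move=> i _; rewrite coefXn.
Qed.

Lemma qfactS n : qfact n.+1 = qfact n * qint n.+1.
Proof. by rewrite /qfact big_nat_recr. Qed.

Lemma qfact_neq0 n : qfact n != 0.
Proof.
elim: n => [|n IH].
  by rewrite /qfact big_geq //; apply: oner_neq0.
rewrite qfactS; apply: mulf_neq0; first exact: IH.
exact: qint_neq0.
Qed.

Lemma qint0 : qint 0 = 0. Proof. by rewrite /qint big_ord0. Qed.
Lemma qfact0 : qfact 0 = 1. Proof. by rewrite /qfact big_geq. Qed.

Lemma G_fact n k : (k <= n)%N -> G n k * qfact k * qfact (n - k) = qfact n.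
Proof.
elim: n k => [|n IH] [|k] //= Hk.
- by rewrite qfact0 !mul1r.
- by rewrite qfact0 subn0 !mul1r.
have B : q ^+ k.+1 * G n k.+1 * qfact k.+1 * qfact (n - k) =
         qfact n * (q ^+ k.+1 * qint (n - k)).
  case: (ltnP k n) => Hkn.
    have -> : (n - k = (n - k.+1).+1)%N by rewrite subnSK.
    rewrite [qfact (n - k.+1).+1]qfactS -(IH k.+1 Hkn); ring.
  have -> : k = n by apply/eqP; rewrite eqn_leq Hkn -ltnS Hk.
  by rewrite G_small // subnn qint0 !(mulr0, mul0r).
rewrite subSS mulrDl mulrDl B [qfact k.+1]qfactS.
rewrite qfactS.
have -> : qint n.+1 = qint (k.+1 + (n-k)) by rewrite addSn subnKC.
rewrite qintD -(IH k Hk); ring.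
Qed.

Lemma G_rev j n k : (k <= n)%N ->
  G (j + k) j * G (j + n) (n - k) = G (j + n) n * G n k.
Proof.
move=> Hkn.
have D0 : qfact j * qfact k * qfact (n - k) != 0.
  by apply: mulf_neq0; [apply: mulf_neq0|]; apply: qfact_neq0.
apply: (mulIf D0).
have E1 := G_fact _ _ (leq_addr k j); rewrite addKn in E1.
have E2 : G (j + n) (n - k) * qfact (n - k) * qfact (j + k) = qfact (j + n).
  have H : (n - k <= j + n)%N by lia.
  have := G_fact _ _ H; have -> : (j + n - (n - k) = j + k)%N by lia. done.
have E3 := G_fact _ _ Hkn.
have E4 := G_fact _ _ (leq_addl j n); rewrite addnK in E4.
transitivity ((G (j + k) j * qfact j * qfact k) * G (j + n) (n - k) * qfact (n - k)).
  ring.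
rewrite E1.
transitivity (G (j + n) n * (G n k * qfact k * qfact (n - k)) * qfact j); last by ring.
rewrite E3.
transitivity (G (j + n) (n - k) * qfact (n - k) * qfact (j + k)); first by ring.
rewrite E2 -E4; ring.
Qed.

Lemma alt_sum n :
  \sum_(k < n.+1) (-1) ^+ k * q ^+ 'C(k, 2) * G n k = (n == 0%N)%:R.
Proof.
case: n => [|m].
  by rewrite big_ord1 /= expr0 !mul1r.
rewrite big_ord_recl.
pose T k := (-1) ^+ k * q ^+ 'C(k.+1, 2) * G m k.
have E : forall k : 'I_m.+1, (-1) ^+ (@lift m.+2 ord0 k) * q ^+ 'C(@lift m.+2 ord0 k, 2) * G m.+1 (@lift m.+2 ord0 k)
          = T k.+1 - T k.
  move=> k; rewrite lift0 GS /T.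
  have -> : 'C(k.+2, 2) = ('C(k.+1, 2) + k.+1)%N by rewrite binS bin1.
  rewrite exprD exprS; ring.
rewrite (eq_bigr _ (fun k _ => E k)).
rewrite -(big_mkord xpredT (fun k => T k.+1 - T k)) telescope_sumr //.
rewrite /T (G_small m m.+1) // G_n0.
have -> : G m.+1 ord0 = 1 by [].
change ((-1) ^+ 0 * q ^+ 0 * 1 + ((-1) ^+ m.+1 * q ^+ 'C(m.+2, 2) * 0 - (-1) ^+ 0 * q ^+ 0 * 1) = (0%N)%:R :> Kq).
ring.
Qed.

Lemma hockey M m :
  \sum_(t < m.+1) q ^+ t * G (M + t) t = G (M.+1 + m) m.
Proof.
elim: m => [|m IH].
  by rewrite big_ord1 /= expr0 mul1r addn0 !G_n0.
rewrite big_ord_recr /= IH.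
by rewrite !addnS addSn GS.
Qed.

Lemma prod_coef j M s m :
  ps_prod [seq ps_inv1m (q ^+ (r + j)) | r <- iota s M.+1] m
  = q ^+ ((s + j) * m) * G (M + m) m.
Proof.
elim: M s m => [|M IH] s m.
  rewrite /= /ps_mul big_ord_recr /= big1.
    by rewrite add0r subnn /ps_one /ps_inv1m eqxx mulr1 G_nn exprM mulr1.
  move=> k _; rewrite /ps_one.
  have -> : (m - k == 0)%N = false by apply/negbTE; rewrite subn_eq0 -ltnNge.
  by rewrite mulr0.
have PC : forall x l, ps_prod (x :: l) = @ps_mul Kq x (ps_prod l) by [].
rewrite -[iota s M.+2]/(s :: iota s.+1 M.+1) map_cons PC {1}/ps_mul.
rewrite -hockey (reindex_inj rev_ord_inj) mulr_sumr.
apply: eq_bigr => k _.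
rewrite IH /ps_inv1m /= subSS.
have Hk : (k <= m)%N by rewrite -ltnS.
rewrite subKn // mulrA mulrA -!exprM -!exprD.
congr (_ * _); congr (_ ^+ _).
nia.
Qed.

Lemma qbinom_G i j : (j <= i)%N -> qbinom i j = G i j.
Proof.
move=> H; rewrite /qbinom -(G_fact _ _ H) -[G i j * _ * _]mulrA mulfK //.
by apply: mulf_neq0; apply: qfact_neq0.
Qed.

Lemma binC k j : 'C((k + j).+1, 2) = ('C(j.+1, 2) + k * j.+1 + 'C(k, 2))%N.
Proof.
elim: k => [|k IH]; first by rewrite add0n mul0n bin0n !addn0.
rewrite addSn binS IH bin1 (binS k 1) bin1; lia.
Qed.

Theorem mainTheorem7 (j : nat) :
  ps_scale ((-1) ^+ j * q ^ (- ('C(j.+1, 2))%:Z))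
    (ps_ysum_from j (fun i =>
       ps_scale ((-1) ^+ i * q ^+ 'C(i.+1, 2) * qbinom i j)
         (ps_yshift (i - j)
            (ps_prod [seq ps_inv1m (q ^+ (r + j)) | r <- iota 1 i.+1]))))
  = @ps_one Kq.
Proof.
apply: functional_extensionality => n.
rewrite /ps_scale /ps_ysum_from /ps_yshift (big_addn 0 (j + n.+1) j) addKn big_mkord.
pose C := (-1) ^+ j * q ^+ 'C(j.+1, 2) * q ^+ (j.+1 * n) * G (j + n) n.
have T : forall i : 'I_n.+1,
    (-1) ^+ (i + j) * q ^+ 'C((i + j).+1, 2) * qbinom (i + j) j *
     (if (i + j - j <= n)%N
      then ps_prod [seq ps_inv1m (q ^+ (r + j)) | r <- iota 1 (i + j).+1]
         (n - (i + j - j))%N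
      else 0) = C * ((-1) ^+ i * q ^+ 'C(i, 2) * G n i).
  move=> i; have Hi : (i <= n)%N by rewrite -ltnS.
  rewrite addnK Hi prod_coef qbinom_G ?leq_addl //.
  have -> : (i + j + (n - i) = j + n)%N by lia.
  rewrite [in G (i + j) j]addnC (mulrC _ (G n i)).
  have E1 : G (j + i) j * (q ^+ ((1 + j) * (n - i)) * G (j + n) (n - i)) =
            q ^+ ((1 + j) * (n - i)) * (G (j + n) n * G n i).
    by rewrite -(G_rev j n i Hi); ring.
  rewrite -mulrA E1 binC.
  have -> : q ^+ ('C(j.+1, 2) + i * j.+1 + 'C(i, 2)) =
    q ^+ 'C(j.+1, 2) * q ^+ 'C(i, 2) * q ^+ (i * j.+1).
    by rewrite -!exprD; congr (_ ^+ _); lia.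
  rewrite /C.
  have -> : q ^+ (j.+1 * n) = q ^+ (i * j.+1) * q ^+ ((1 + j) * (n - i)).
    by rewrite -!exprD; congr (_ ^+ _); nia.
  rewrite exprD; ring.
rewrite (eq_bigr _ (fun i _ => T i)) -mulr_sumr alt_sum /ps_one /C.
rewrite -exprnN.
have Hq : q ^+ 'C(j.+1, 2) != 0 by apply: expf_neq0; exact: q_neq0.
transitivity (((-1) ^+ j * (-1) ^+ j) * ((q ^+ 'C(j.+1, 2))^-1 * q ^+ 'C(j.+1, 2))
   * (q ^+ (j.+1 * n) * G (j + n) n * (n == 0%N)%:R)); first by ring.
rewrite -exprMn mulrNN mulr1 expr1n mulVf // !mul1r.
clear T C; case: n => [|n]; last by rewrite mulr0.
by rewrite muln0 expr0 addn0 G_n0 !mul1r.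
Qed.
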